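(* Let $P$ and $Q$ be partial orders on the same finite ground set, and suppose the comparability graph of $P$ contains the comparability graph of $Q$ as a subgraph. Then $e(Q)\ge e(P)$, and if the containment is proper then $e(Q)>e(P)$.
   Context: The comparability graph of a poset is the simple graph on its ground set in which two distinct elements are adjacent iff they are comparable. $e(\cdot)$ denotes the number of linear extensions (order-preserving bijections from the ground set of size $n$ onto $[n]$). *)

(* Defs.v *)
From mathcomp Require Import all_boot.
Set Implicit Arguments. Unset Strict Implicit. Unset Printing Implicit Defensive.

Definition is_partial_order {T : finType} (P : rel T) : Prop :=
  reflexive P /\ antisymmetric P /\ transitive P.

Definition comparable_in {T : finType} (P : rel T) (x y : T) : bool :=
  (x != y) && (P x y || P y x).

Definition is_linext {T : finType} (P : rel T) (f : {ffun T -> 'I_#|T|}) : bool :=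
  injectiveb f && [forall x, forall y, P x y ==> (f x <= f y)].

Definition num_linext {T : finType} (P : rel T) : nat :=
  #|[set f : {ffun T -> 'I_#|T|} | is_linext P f]|.

(* Main.v *)
Require Import Defs.
From mathcomp Require Import all_boot zify.
Set Implicit Arguments. Unset Strict Implicit. Unset Printing Implicit Defensive.

Section Transfer.
Variable T : finType.
Variable R : rel T.
Hypothesis Rrefl : reflexive R.
Hypothesis Ranti : antisymmetric R.
Hypothesis Rtrans : transitive R.
Variable N : nat.

Lemma Rtr a b c : R a b -> R b c -> R a c.
Proof. move=> h1 h2; exact: (Rtrans h1 h2). Qed.

Definition Smaps := [set f : {ffun T -> 'I_N.+1} | [forall x, 0 < f x] &&
  [forall x, forall y, ((x != y) && R x y) ==> (f x < f y)]].

Definition chainb (C : {set T}) :=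
  [forall x in C, forall y in C, [|| x == y, R x y | R y x]].

Definition Amaps := [set g : {ffun T -> 'I_N.+1} | [forall x, 0 < g x] &&
  [forall C : {set T}, chainb C ==> (\sum_(x in C) g x <= N)]].

Definition mpred (f : T -> nat) x := \max_(y | (y != x) && R y x) f y.

Definition phi (f : {ffun T -> 'I_N.+1}) : {ffun T -> 'I_N.+1} :=
  [ffun x => inord (f x - mpred (fun y => f y) x)].

Lemma SmapsP (f : {ffun T -> 'I_N.+1}) : reflect ((forall x, 0 < f x) /\ (forall x y, x != y -> R x y -> f x < f y))
  (f \in Smaps).
Proof.
rewrite inE; apply: (iffP andP) => [[/forallP H1 /forallP H2]|[H1 H2]]; split.
- by [].
- by move=> x y nxy rxy; have /forallP/(_ y) := H2 x; rewrite nxy rxy.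
- by apply/forallP.
- by apply/forallP => x; apply/forallP => y; apply/implyP => /andP[] /H2; apply.
Qed.

Lemma AmapsP (g : {ffun T -> 'I_N.+1}) : reflect ((forall x, 0 < g x) /\ (forall C, chainb C -> \sum_(x in C) g x <= N))
  (g \in Amaps).
Proof.
rewrite inE; apply: (iffP andP) => [[/forallP H1 /forallP H2]|[H1 H2]]; split.
- by [].
- by move=> C cC; have /implyP := H2 C; apply.
- by apply/forallP.
- by apply/forallP => C; apply/implyP => /H2.
Qed.

Lemma chainP (C : {set T}) : reflect (forall x y, x \in C -> y \in C -> [|| x == y, R x y | R y x]) (chainb C).
Proof.
apply: (iffP forallP) => [H x y xC yC|H x].
  by have /forall_inP := implyP (H x) xC; apply.
by apply/implyP => xC; apply/forall_inP => y yC; apply: H.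
Qed.

Lemma chainD (C : {set T}) a : chainb C -> chainb (C :\ a).
Proof.
move/chainP=> H; apply/chainP => x y; rewrite !inE => /andP[_ xC] /andP[_ yC]; exact: H.
Qed.

Lemma phiE (f : {ffun T -> 'I_N.+1}) x : f \in Smaps -> (phi f x : nat) = f x - mpred (fun y => f y) x.
Proof.
move=> _; rewrite ffunE inordK //; have := ltn_ord (f x); lia.
Qed.

Lemma mpred_lt (f : {ffun T -> 'I_N.+1}) x : f \in Smaps -> mpred (fun y => f y) x < f x.
Proof.
case/SmapsP=> H1 H2; have := H1 x; case: (f x : nat) (H2 ^~ x) => [//|k] H _.
rewrite ltnS; apply/bigmax_leqP => y /andP[nyx ryx]; have := H y nyx ryx; rewrite ltnS //.
Qed.

Lemma chain_sum (f : {ffun T -> 'I_N.+1}) (C : {set T}) : f \in Smaps -> chainb C ->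
  \sum_(x in C) phi f x <= \max_(x in C) f x.
Proof.
move=> fS; move: C; case/SmapsP: (fS) => H1 H2.
suff K : forall k (C : {set T}), #|C| <= k -> chainb C -> \sum_(x in C) phi f x <= \max_(x in C) f x.
  by move=> C; apply: K.
elim=> [|k IH] C.
  by rewrite leqn0 => /eqP/cards0_eq ->; rewrite big_set0.
move=> cardC cC.
have [C0|Cn0] := eqVneq C set0; first by rewrite C0 big_set0.
have [t tC tmax] : {t | t \in C & \max_(x in C) f x = f t}.
  by apply: eq_bigmax_cond; rewrite card_gt0.
rewrite (big_setD1 t) //= tmax.
have IH1 := IH (C :\ t).
have cD : #|C :\ t| <= k by move: cardC; rewrite (cardsD1 t C) tC add1n ltnS.
have := IH1 cD (chainD t cC).
have Hm : \max_(x in C :\ t) f x <= mpred (fun y => f y) t.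
  apply/bigmax_leqP => y; rewrite !inE => /andP[nyt yC].
  apply: leq_bigmax_cond; rewrite nyt /=.
  move/chainP: cC => /(_ y t yC tC); rewrite (negbTE nyt) /=.
  case/orP=> // rty.
  have := H2 t y; rewrite eq_sym nyt => /(_ isT rty) lt.
  have : f y <= \max_(x in C) f x by apply: leq_bigmax_cond.
  by rewrite tmax leqNgt lt.
rewrite phiE //.
have := mpred_lt t fS.
lia.
Qed.

Lemma phi_in (f : {ffun T -> 'I_N.+1}) : f \in Smaps -> phi f \in Amaps.
Proof.
move=> fS; apply/AmapsP; split.
  by move=> x; rewrite phiE //; have := mpred_lt x fS; lia.
move=> C cC; apply: leq_trans (chain_sum fS cC) _.
by apply/bigmax_leqP => x _; rewrite -ltnS.
Qed.

Lemma phi_inj : {in Smaps &, injective phi}.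
Proof.
move=> f1 f2 f1S f2S E.
have Hv : forall x, (f1 x : nat) - mpred (fun y => f1 y) x = f2 x - mpred (fun y => f2 y) x.
  by move=> x; rewrite -phiE // -phiE // E.
suff K : forall k x, (f1 x : nat) <= k -> (f1 x : nat) = f2 x.
  by apply/ffunP => x; apply: val_inj; apply: (K (f1 x)).
case/SmapsP: (f1S) => H11 H12.
elim=> [|k IH] x.
  by rewrite leqn0 => /eqP E0; have := H11 x; rewrite E0.
move=> lek.
have Em : mpred (fun y => f1 y) x = mpred (fun y => f2 y) x.
  apply: eq_bigr => y /andP[nyx ryx]; apply: IH.
  by rewrite -ltnS; apply: leq_trans (H12 y x nyx ryx) lek.
have h1 := mpred_lt x f1S; have h2 := mpred_lt x f2S; have h3 := Hv x; rewrite Em in h1 h3.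
by rewrite -(subnK (ltnW h1)) h3 subnK // ltnW.
Qed.

Definition F (g : {ffun T -> 'I_N.+1}) x :=
  \max_(C : {set T} | chainb C && (x \in C) && [forall z in C, R z x]) \sum_(z in C) (g z : nat).

Definition psi (g : {ffun T -> 'I_N.+1}) : {ffun T -> 'I_N.+1} :=
  [ffun x => inord (F g x)].

Lemma F_le (g : {ffun T -> 'I_N.+1}) x : g \in Amaps -> F g x <= N.
Proof.
case/AmapsP=> _ H; apply/bigmax_leqP => C /andP[/andP[cC _] _]; exact: H.
Qed.

Lemma psiE (g : {ffun T -> 'I_N.+1}) x : g \in Amaps -> (psi g x : nat) = F g x.
Proof. by move=> gA; rewrite ffunE inordK // ltnS F_le. Qed.

Lemma F_ge (g : {ffun T -> 'I_N.+1}) x : g x <= F g x.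
Proof.
have -> : (g x : nat) = \sum_(z in [set x]) (g z : nat) by rewrite big_set1.
apply: leq_bigmax_cond; rewrite set11 andbT.
apply/andP; split.
  by apply/chainP => y z; rewrite !inE => /eqP -> /eqP ->; rewrite eqxx.
by apply/forall_inP => z; rewrite inE => /eqP ->.
Qed.

Lemma F_ext (g : {ffun T -> 'I_N.+1}) x y : y != x -> R y x -> F g y + g x <= F g x.
Proof.
move=> nyx ryx.
have [C Cp CE] : {C | C \in [pred C : {set T} | chainb C && (y \in C) && [forall z in C, R z y]]
    & F g y = \sum_(z in C) (g z : nat)}.
  apply: eq_bigmax_cond; apply/card_gt0P; exists [set y]; rewrite inE set11 andbT.
  apply/andP; split.
    by apply/chainP => a b; rewrite !inE => /eqP -> /eqP ->; rewrite eqxx.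
  by apply/forall_inP => z; rewrite inE => /eqP ->.
move: Cp; rewrite inE => /andP[/andP[cC yC] /forall_inP bC].
have xC : x \notin C.
  apply/negP => xC; have := bC x xC => rxy.
  by move: nyx; rewrite (Ranti (introT andP (conj ryx rxy))) eqxx.
rewrite CE addnC.
have -> : (g x : nat) + \sum_(z in C) (g z : nat) = \sum_(z in x |: C) (g z : nat) by rewrite big_setU1.
rewrite /F.
apply: leq_bigmax_cond; rewrite setU11 andbT; apply/andP; split.
  apply/chainP => a b; rewrite !inE => /orP[/eqP->|aC] /orP[/eqP->|bC'].
  - by rewrite eqxx.
  - by apply/or3P; constructor 3; exact: (Rtr (bC b bC') ryx).
  - by apply/or3P; constructor 2; exact: (Rtr (bC a aC) ryx).
  - by move/chainP: cC; apply.
apply/forall_inP => z; rewrite !inE => /orP[/eqP->|zC]; first exact: Rrefl.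
exact: Rtr (bC z zC) ryx.
Qed.

Lemma F_strict (g : {ffun T -> 'I_N.+1}) x y : g \in Amaps -> y != x -> R y x -> F g y < F g x.
Proof.
case/AmapsP=> H1 _ nyx ryx; have := F_ext g nyx ryx; have := H1 x; lia.
Qed.

Lemma psi_in (g : {ffun T -> 'I_N.+1}) : g \in Amaps -> psi g \in Smaps.
Proof.
move=> gA; apply/SmapsP; split.
  by move=> x; rewrite psiE //; case/AmapsP: gA => H _; apply: leq_trans (H x) (F_ge g x).
by move=> x y nxy rxy; rewrite !psiE //; apply: F_strict.
Qed.

Lemma phi_psi (g : {ffun T -> 'I_N.+1}) : g \in Amaps -> phi (psi g) = g.
Proof.
move=> gA; apply/ffunP => x; apply: val_inj => /=.
rewrite phiE; last exact: psi_in.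
have Emp : mpred (fun y => psi g y) x = mpred (F g) x.
  by apply: eq_bigr => y _; rewrite psiE.
rewrite Emp psiE //.
have Hle : g x + mpred (F g) x <= F g x.
  have : mpred (F g) x <= F g x - g x.
    apply/bigmax_leqP => y /andP[nyx ryx]; have := F_ext g nyx ryx; lia.
  have := F_ge g x; lia.
suff Hge : F g x <= g x + mpred (F g) x by lia.
have [C Cp CE] : {C | C \in [pred C : {set T} | chainb C && (x \in C) && [forall z in C, R z x]]
    & F g x = \sum_(z in C) (g z : nat)}.
  apply: eq_bigmax_cond; apply/card_gt0P; exists [set x]; rewrite inE set11 andbT.
  apply/andP; split.
    by apply/chainP => a b; rewrite !inE => /eqP -> /eqP ->; rewrite eqxx.
  by apply/forall_inP => z; rewrite inE => /eqP ->.
move: Cp; rewrite inE => /andP[/andP[cC xC] /forall_inP bC].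
rewrite CE (big_setD1 x) //= leq_add2l.
have [C0|Cn0] := eqVneq (C :\ x) set0; first by rewrite C0 big_set0.
have [y yC ymax] : {y | y \in C :\ x & \max_(z in C :\ x) F g z = F g y}.
  by apply: eq_bigmax_cond; rewrite card_gt0.
move: (yC); rewrite !inE => /andP[nyx yC'].
apply: leq_trans (_ : F g y <= _); last first.
  by apply: leq_bigmax_cond; rewrite nyx bC.
apply: leq_bigmax_cond; rewrite yC chainD //=.
apply/forall_inP => z zD; have [->|nzy] := eqVneq z y; first exact: Rrefl.
move: (zD); rewrite !inE => /andP[_ zC].
move/chainP: cC => /(_ z y zC yC'); rewrite (negbTE nzy) /= => /orP[//|ryz].
have nyz : y != z by rewrite eq_sym.
have lt := F_strict gA nyz ryz.
have : F g z <= \max_(z in C :\ x) F g z by apply: leq_bigmax_cond.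
by rewrite ymax leqNgt lt.
Qed.

Lemma card_SA : #|Smaps| = #|Amaps|.
Proof.
apply/eqP; rewrite eqn_leq; apply/andP; split.
  rewrite -(card_in_imset phi_inj); apply: subset_leq_card.
  by apply/subsetP => g /imsetP[f fS ->]; apply: phi_in.
have psi_inj : {in Amaps &, injective psi}.
  by move=> g1 g2 g1A g2A E; rewrite -(phi_psi g1A) -(phi_psi g2A) E.
rewrite -(card_in_imset psi_inj); apply: subset_leq_card.
by apply/subsetP => g /imsetP[f fS ->]; apply: psi_in.
Qed.

End Transfer.

Lemma card_ltord n k : k <= n -> #|[set i : 'I_n | i < k]| = k.
Proof.
move=> kn.
have -> : [set i : 'I_n | i < k] = [set widen_ord kn i | i : 'I_k].
  apply/setP => i; rewrite inE; apply/idP/imsetP => [ik|[j _ ->]]; last by case: j.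
  by exists (Ordinal ik) => //; apply: val_inj.
rewrite card_imset ?card_ord //.
by move=> i j /(congr1 val) /= E; apply: val_inj.
Qed.

Section Lin.
Variable T : finType.
Variable R : rel T.
Hypothesis Rrefl : reflexive R.
Variable N : nat.

Definition Inj := [set f in Smaps R N | injectiveb f].
Definition Inc := [set h : {ffun 'I_#|T| -> 'I_N.+1} | [forall i, 0 < h i] &&
   [forall i : 'I_#|T|, forall j : 'I_#|T|, (i < j) ==> (h i < h j)]].
Definition NI := [set f : {ffun T -> 'I_N.+1} | ~~ injectiveb f].

Lemma IncP (h : {ffun 'I_#|T| -> 'I_N.+1}) : reflect ((forall i, 0 < h i) /\ (forall i j : 'I_#|T|, i < j -> h i < h j)) (h \in Inc).
Proof.
rewrite inE; apply: (iffP andP) => [[/forallP H1 /forallP H2]|[H1 H2]]; split => //.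
- by move=> i j ij; have /forallP/(_ j)/implyP := H2 i; apply.
- by apply/forallP.
- by apply/forallP => i; apply/forallP => j; apply/implyP => /H2.
Qed.

Lemma inc_lt (h : {ffun 'I_#|T| -> 'I_N.+1}) (i j : 'I_#|T|) : h \in Inc -> (h i < h j) = (i < j).
Proof.
case/IncP=> _ H; apply/idP/idP => [lt|]; last exact: H.
rewrite ltnNge; apply/negP; rewrite leq_eqVlt => /orP[/eqP E|ji].
  by have /val_inj E' : val j = val i := E; move: lt; rewrite E' ltnn.
by have := H _ _ ji; rewrite ltnNge ltnW.
Qed.

Definition rk (f : {ffun T -> 'I_N.+1}) x := #|[set y | f y < f x]|.

Lemma rk_lt (f : {ffun T -> 'I_N.+1}) x y : f x < f y -> rk f x < rk f y.
Proof.
move=> lt; apply: proper_card; apply/properP; split.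
  by apply/subsetP => z; rewrite !inE => h; apply: ltn_trans h lt.
by exists x; rewrite !inE ?ltnn.
Qed.

Lemma rk_le (f : {ffun T -> 'I_N.+1}) x y : f x <= f y -> rk f x <= rk f y.
Proof.
move=> le; apply: subset_leq_card; apply/subsetP => z; rewrite !inE => h.
exact: leq_trans h le.
Qed.

Lemma rk_bound (f : {ffun T -> 'I_N.+1}) x : rk f x < #|T|.
Proof.
rewrite -cardsT; apply: proper_card; apply/properP; split; first exact: subsetT.
by exists x; rewrite !inE ?ltnn.
Qed.

Lemma rk_linext (L : {ffun T -> 'I_#|T|}) x : injective L -> #|[set y | L y < L x]| = L x.
Proof.
move=> Linj.
have Lbij : bijective L.
  by apply: (inj_card_bij Linj); rewrite card_ord.
have -> : [set y | L y < L x] = L @^-1: [set i : 'I_#|T| | i < L x].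
  by apply/setP => y; rewrite !inE.
rewrite on_card_preimset; last exact: onW_bij.
by rewrite card_ltord // ltnW.
Qed.

Definition Phi (p : {ffun T -> 'I_#|T|} * {ffun 'I_#|T| -> 'I_N.+1}) : {ffun T -> 'I_N.+1} :=
  [ffun x => p.2 (p.1 x)].

Definition LD := setX [set L : {ffun T -> 'I_#|T|} | is_linext R L] Inc.

Lemma linextP (L : {ffun T -> 'I_#|T|}) :
  reflect (injective L /\ forall x y, R x y -> L x <= L y) (is_linext R L).
Proof.
apply: (iffP andP) => [[/injectiveP H1 /forallP H2]|[H1 H2]]; split => //.
- by move=> x y rxy; have /forallP/(_ y)/implyP := H2 x; apply.
- exact/injectiveP.
- by apply/forallP => x; apply/forallP => y; apply/implyP => /H2.
Qed.

Lemma Phi_in p : p \in LD -> Phi p \in Inj.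
Proof.
case: p => L h; rewrite inE /= inE => /andP[/linextP[Linj Lle] hI].
rewrite inE; apply/andP; split.
  apply/SmapsP; split; first by move=> x; rewrite ffunE; case/IncP: hI.
  move=> x y nxy rxy; rewrite !ffunE inc_lt //.
  rewrite ltn_neqAle Lle // andbT; apply/negP => /eqP/val_inj/Linj E.
  by rewrite E eqxx in nxy.
apply/injectiveP => x y; rewrite !ffunE /= => E; apply: Linj.
have e1 := inc_lt (L x) (L y) hI; have e2 := inc_lt (L y) (L x) hI.
have En : nat_of_ord (h (L x)) = nat_of_ord (h (L y)) by rewrite E.
have f1 : (nat_of_ord (h (L x)) < nat_of_ord (h (L y))) = false by rewrite En ltnn.
have f2 : (nat_of_ord (h (L y)) < nat_of_ord (h (L x))) = false by rewrite En ltnn.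
rewrite f1 in e1; rewrite f2 in e2.
case: (ltngtP (L x) (L y)) => [lt|lt|eq]; first by rewrite lt in e1.
  by rewrite lt in e2.
exact: ord_inj.
Qed.

Lemma Phi_inj : {in LD &, injective Phi}.
Proof.
case=> L h [L' h'] H1 H2 E.
move: H1 H2; rewrite !in_setX /= => /andP[H1 hI] /andP[H1' h'I].
rewrite inE in H1; rewrite inE in H1'.
move: H1 H1' => /linextP[Linj _] /linextP[L'inj _].
have Ey : forall z, nat_of_ord (h (L z)) = nat_of_ord (h' (L' z)).
  by move=> z; have := congr1 (fun f : {ffun T -> 'I_N.+1} => nat_of_ord (f z)) E; rewrite !ffunE.
have EL : L = L'.
  apply/ffunP => x; apply: ord_inj.
  rewrite -(rk_linext x Linj) -(rk_linext x L'inj).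
  apply: eq_card => y; rewrite !inE.
  by rewrite -(inc_lt (L y) (L x) hI) -(inc_lt (L' y) (L' x) h'I) !Ey.
subst L'.
have Lbij : bijective L by apply: (inj_card_bij Linj); rewrite card_ord.
case: Lbij => g gK Kg.
have -> : h = h'.
  apply/ffunP => i; apply: ord_inj; rewrite -(Kg i); exact: Ey.
by [].
Qed.

Lemma Phi_onto f : f \in Inj -> f \in Phi @: LD.
Proof.
rewrite inE => /andP[fS /injectiveP finj].
case/SmapsP: (fS) => H1 H2.
pose L := [ffun x => Ordinal (rk_bound f x)].
have Lv : forall z, nat_of_ord (L z) = rk f z by move=> z; rewrite ffunE.
have Linj : injective L.
  move=> x y Exy; have := congr1 (@nat_of_ord _) Exy; rewrite !Lv => E.
  apply/eqP; apply: contraT => nxy.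
  have : (f x : nat) != f y by apply: contra nxy => /eqP/ord_inj/finj ->.
  by rewrite neq_ltn => /orP[lt|lt]; have := rk_lt lt; rewrite E ltnn.
have Lbij : bijective L by apply: (inj_card_bij Linj); rewrite card_ord.
case: Lbij => g gK Kg.
pose h := [ffun i => f (g i)].
have hL : forall x, h (L x) = f x by move=> x; rewrite ffunE gK.
apply/imsetP; exists (L, h); last by apply/ffunP => x; rewrite ffunE /= hL.
rewrite in_setX /=; apply/andP; split.
  rewrite inE; apply/linextP; split => // x y rxy; rewrite !Lv.
  apply: rk_le; have [->|nxy] := eqVneq x y; first exact: leqnn.
  exact: ltnW (H2 x y nxy rxy).
apply/IncP; split; first by move=> i; rewrite ffunE.
move=> i j ij; rewrite !ffunE ltnNge; apply/negP => le.
have ij' : rk f (g i) < rk f (g j) by rewrite -!Lv !Kg.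
move: le; rewrite leq_eqVlt => /orP[/eqP/ord_inj/finj E|lt].
  by move: ij'; rewrite E ltnn.
by have := rk_lt lt; move: ij'; lia.
Qed.

Lemma card_Inj : #|Inj| = num_linext R * #|Inc|.
Proof.
have -> : Inj = Phi @: LD.
  apply/setP => f; apply/idP/idP; first exact: Phi_onto.
  by case/imsetP => p pD ->; apply: Phi_in.
by rewrite (card_in_imset Phi_inj) cardsX.
Qed.

Lemma card_S_le : #|Smaps R N| <= #|Inj| + #|NI|.
Proof.
apply: leq_trans (leq_card_setU _ _); apply: subset_leq_card.
apply/subsetP => f fS; rewrite in_setU [f \in Inj]inE [f \in NI]inE fS.
by case: (injectiveb f).
Qed.

Lemma card_Inj_le : #|Inj| <= #|Smaps R N|.
Proof. by apply: subset_leq_card; apply/subsetP => f; rewrite inE => /andP[]. Qed.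

End Lin.

Section NIb.
Variable T : finType.
Variable N : nat.

Definition pk (f : {ffun T -> 'I_N.+1}) := [pick p : T * T | (p.1 != p.2) && (f p.1 == f p.2)].

Definition Psi (q : {ffun T -> 'I_N.+1} * 'I_N.+1) : option ((T * T) * {ffun T -> 'I_N.+1}) :=
  match pk q.1 with
  | Some p => Some (p, [ffun z => if z == p.2 then q.2 else q.1 z])
  | None => None
  end.

Lemma pk_spec f : f \in NI T N -> {p | pk f = Some p & (p.1 != p.2) && (f p.1 == f p.2)}.
Proof.
rewrite inE => ninj; rewrite /pk; case: pickP => [p Hp|Hn]; first by exists p.
exfalso; move/negP: ninj; apply; apply/injectiveP => x y fxy.
apply/eqP; apply: contraT => nxy; have := Hn (x, y); rewrite /= nxy fxy eqxx.
by [].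
Qed.

Lemma NI_bound : #|NI T N| * N.+1 <= #|T| * #|T| * N.+1 ^ #|T|.
Proof.
have Hinj : {in setX (NI T N) setT &, injective Psi}.
  case=> f1 k1 [f2 k2]; rewrite !in_setX !in_setT /= !andbT => H1 H2.
  have [p1 E1 Hp1] := pk_spec H1; have [p2 E2 Hp2] := pk_spec H2.
  rewrite /Psi /= E1 E2 => -[Ep Ef]; subst p2.
  case/andP: Hp1 => np1 /eqP e1; case/andP: Hp2 => _ /eqP e2.
  have Ek : k1 = k2.
    by have := congr1 (fun f : {ffun T -> 'I_N.+1} => f p1.2) Ef; rewrite !ffunE eqxx.
  subst k2; congr (_, _); apply/ffunP => z.
  have := congr1 (fun f : {ffun T -> 'I_N.+1} => f z) Ef; rewrite !ffunE.
  have [->|nz] := eqVneq z p1.2; last by [].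
  move=> _; rewrite -e1 -e2.
  have := congr1 (fun f : {ffun T -> 'I_N.+1} => f p1.1) Ef; rewrite !ffunE.
  by rewrite (negbTE np1).
have := card_in_imset Hinj; rewrite cardsX cardsT card_ord => <-.
have -> : #|T| * #|T| * N.+1 ^ #|T| = #|[set~ (None : option ((T * T) * {ffun T -> 'I_N.+1}))]|.
  by rewrite cardsC1 card_option !card_prod card_ffun card_ord.
apply: subset_leq_card; apply/subsetP => q /imsetP[[f k]]; rewrite in_setX in_setT /= andbT => fN ->.
have [p E _] := pk_spec fN.
by rewrite !inE /Psi /= E.
Qed.

End NIb.

Lemma Inc_bound (T : finType) M : M ^ #|T| <= #|Inc T (#|T| * M)|.
Proof.
set n := #|T|.
pose th (u : {ffun 'I_n -> 'I_M}) : {ffun 'I_n -> 'I_(n * M).+1} :=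
  [ffun i : 'I_n => inord ((i : nat) * M + u i + 1)].
have Hv : forall (u : {ffun 'I_n -> 'I_M}) (i : 'I_n), (i : nat) * M + u i + 1 <= n * M.
  move=> u i; have := ltn_ord i; have := ltn_ord (u i).
  set a := (i : nat); set b := (u i : nat); move=> hb ha.
  have : a.+1 * M <= n * M by rewrite leq_mul2r ha orbT.
  rewrite mulSn; lia.
have thE : forall (u : {ffun 'I_n -> 'I_M}) (i : 'I_n), (th u i : nat) = (i : nat) * M + u i + 1.
  by move=> u i; rewrite ffunE inordK // ltnS.
have thinj : injective th.
  move=> u1 u2 E; apply/ffunP => i; apply: ord_inj.
  have := congr1 (fun f : {ffun 'I_n -> 'I_(n * M).+1} => nat_of_ord (f i)) E.
  rewrite /= !thE; lia.
have -> : M ^ n = #|{ffun 'I_n -> 'I_M}| by rewrite card_ffun !card_ord.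
rewrite -(card_imset _ thinj).
apply: subset_leq_card; apply/subsetP => h /imsetP[u _ ->].
apply/IncP; split; first by move=> i; rewrite thE addn1.
move=> i j ij; rewrite !thE.
have := ltn_ord (u i).
set a := (i : nat); set b := (j : nat); set c := (u i : nat); set d := (u j : nat).
move=> hc.
have : a.+1 * M <= b * M by rewrite leq_mul2r ij orbT.
rewrite mulSn; lia.
Qed.

Section Dcons.
Variable T : finType.
Variables P Q : rel T.
Variables a b : T.
Hypothesis nab : a != b.
Hypothesis Pab : P a b || P b a.
Hypothesis nQab : ~~ Q a b.
Hypothesis nQba : ~~ Q b a.
Hypothesis PQ : forall x y, comparable_in Q x y -> comparable_in P x y.
Variable K N : nat.
Hypothesis NE : N = #|T| * (4 * K).

Lemma chainQP C : chainb Q C -> chainb P C.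
Proof.
move/chainP=> H; apply/chainP => x y xC yC.
have [//|nxy] := eqVneq x y.
have := H x y xC yC; rewrite (negbTE nxy) /= => hq.
have : comparable_in P x y by apply: PQ; rewrite /comparable_in nxy.
by rewrite /comparable_in nxy.
Qed.

Lemma AmapsPQ : Amaps P N \subset Amaps Q N.
Proof.
apply/subsetP => g /AmapsP[H1 H2]; apply/AmapsP; split => // C /chainQP; exact: H2.
Qed.

Definition tv (p : {ffun T -> 'I_K} * ('I_#|T| * 'I_#|T|)) v :=
  if v == a then 2 * #|T| * K + p.2.1 * K + p.1 v + 1
  else if v == b then 2 * #|T| * K + p.2.2 * K + p.1 v + 1
  else p.1 v + 1.

Lemma tv_small p v : v != a -> v != b -> tv p v <= K.
Proof. by move=> /negbTE va /negbTE vb; rewrite /tv va vb addn1 ltn_ord. Qed.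

Lemma tv_big p v : tv p v <= 3 * #|T| * K.
Proof.
have Hi : forall (i : 'I_#|T|) (r : 'I_K), 2 * #|T| * K + i * K + r + 1 <= 3 * #|T| * K.
  move=> i r; have := ltn_ord r; have := ltn_ord i.
  set x := (i : nat); set y := (r : nat); move=> hx hy.
  have : x.+1 * K <= #|T| * K by rewrite leq_mul2r hx orbT.
  rewrite mulSn; lia.
rewrite /tv; case: eqP => _; first exact: Hi.
case: eqP => _; first exact: Hi.
have := Hi (Ordinal (ltn_ord (p.2.1))) (p.1 v); rewrite /=; lia.
Qed.

Lemma sum_bound (F : T -> nat) (C : {set T}) c :
  (forall v, v \in C -> v != c -> F v <= K) -> F c <= 3 * #|T| * K ->
  \sum_(v in C) F v <= 4 * #|T| * K.
Proof.
move=> Hs Hc.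
pose G v := if v == c then 3 * #|T| * K else K.
apply: (@leq_trans (\sum_v G v)).
  rewrite big_mkcond /=; apply: leq_sum => v _; rewrite /G.
  have [->|nvc] := eqVneq v c; first by case: ifP.
  by case: ifP => // vC; apply: Hs.
rewrite (bigD1 c) //= {1}/G eqxx.
have -> : \sum_(i | i != c) G i = \sum_(i | i != c) K.
  by apply: eq_bigr => i /negbTE; rewrite /G => ->.
rewrite sum_nat_const cardC1.
have : #|T|.-1 * K <= #|T| * K by rewrite leq_mul2r leq_pred orbT.
rewrite -!mulnA; set X := #|T| * K; set Y := #|T|.-1 * K; lia.
Qed.

Definition theta p : {ffun T -> 'I_N.+1} := [ffun v => inord (tv p v)].

Lemma thetaE p v : (theta p v : nat) = tv p v.
Proof.
rewrite ffunE inordK // ltnS NE; apply: leq_trans (tv_big p v) _.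
rewrite mulnCA mulnA leq_mul2r; apply/orP; right; by rewrite leq_mul2r orbT.
Qed.

Lemma theta_inQ p : theta p \in Amaps Q N.
Proof.
apply/AmapsP; split.
  by move=> v; rewrite thetaE /tv; case: ifP => _; last case: ifP => _; rewrite addn1.
move=> C /chainP cC.
have sum_eq : \sum_(v in C) theta p v = \sum_(v in C) tv p v.
  by apply: eq_bigr => v _; rewrite thetaE.
rewrite sum_eq NE.
have -> : #|T| * (4 * K) = 4 * #|T| * K by rewrite mulnCA mulnA.
have [aC|aC] := boolP (a \in C).
- have bC : b \notin C.
    apply/negP => bC; have := cC a b aC bC.
    by rewrite (negbTE nab) (negbTE nQab) (negbTE nQba).
  apply: (sum_bound (c := a)) => [v vC va|]; last exact: tv_big.
  apply: tv_small => //; apply: contraNneq bC => <-; exact: vC.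
- apply: (sum_bound (c := b)) => [v vC vb|]; last exact: tv_big.
  apply: tv_small => //; apply: contraNneq aC => <-; exact: vC.
Qed.

Lemma theta_notinP p : theta p \notin Amaps P N.
Proof.
apply/negP => /AmapsP[_ H].
have cab : chainb P [set a; b].
  apply/chainP => x y; rewrite !inE => /orP[]/eqP-> /orP[]/eqP->; rewrite ?eqxx //.
  - by rewrite Pab orbT.
  - by rewrite orbA orbC; case/orP: Pab => ->; rewrite ?orbT.
have := H _ cab.
rewrite big_setU1 /=; last by rewrite inE.
rewrite big_set1 !thetaE /tv eqxx eq_sym (negbTE nab) eqxx NE.
have -> : #|T| * (4 * K) = 2 * #|T| * K + 2 * #|T| * K by rewrite mulnCA mulnA -mulnDl -mulnDl.
lia.
Qed.

Lemma theta_inj : injective theta.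
Proof.
case=> u1 [i1 j1] [u2 [i2 j2]] E.
have Ev : forall v, tv (u1, (i1, j1)) v = tv (u2, (i2, j2)) v.
  by move=> v; rewrite -!thetaE E.
have Kp : 0 < K by have := ltn_ord (u1 a); lia.
have key : forall (x y : 'I_#|T|) (r s : 'I_K), x * K + r = y * K + s -> x = y /\ r = s.
  move=> x y r s e.
  have ex : (x * K + r) %/ K = x by rewrite divnMDl // divn_small ?addn0.
  have ey : (y * K + s) %/ K = y by rewrite divnMDl // divn_small ?addn0.
  have rx : (x * K + r) %% K = r by rewrite modnMDl modn_small.
  have sy : (y * K + s) %% K = s by rewrite modnMDl modn_small.
  split; apply: ord_inj; first by rewrite -ex -ey e.
  by rewrite -rx -sy e.
have ha := Ev a; rewrite /tv /= eqxx in ha.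
have hb := Ev b; rewrite /tv /= eqxx eq_sym (negbTE nab) in hb.
have [Ei Ea] : i1 = i2 /\ u1 a = u2 a.
  apply: key; move: ha; set A := 2 * _ * _; set B1 := (i1 : nat) * K; set B2 := (i2 : nat) * K; lia.
have [Ej Eb] : j1 = j2 /\ u1 b = u2 b.
  apply: key; move: hb; set A := 2 * _ * _; set B1 := (j1 : nat) * K; set B2 := (j2 : nat) * K; lia.
subst i2 j2; congr (_, (_, _)).
apply/ffunP => v.
have [->|na] := eqVneq v a; first exact: Ea.
have [->|nb] := eqVneq v b; first exact: Eb.
apply: ord_inj; have := Ev v; rewrite /tv /= (negbTE na) (negbTE nb); lia.
Qed.

Lemma D_bound : #|Amaps P N| + K ^ #|T| * (#|T| * #|T|) <= #|Amaps Q N|.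
Proof.
have sub : theta @: setT \subset Amaps Q N :\: Amaps P N.
  apply/subsetP => g /imsetP[p _ ->]; rewrite inE theta_notinP theta_inQ.
  by [].
have := subset_leq_card sub; rewrite cardsDS ?AmapsPQ // card_imset; last exact: theta_inj.
rewrite cardsT !card_prod card_ffun !card_ord.
have := subset_leq_card AmapsPQ; lia.
Qed.

End Dcons.

Section Num.
Variable n : nat.
Hypothesis n0 : 0 < n.
Variables X K N : nat.
Hypothesis XE : X = (5 * n) ^ n.
Hypothesis KE : K = n * n * X.
Hypothesis NE : N = n * (4 * K).

Lemma X_pos : 0 < X.
Proof. by rewrite XE expn_gt0 muln_gt0 n0. Qed.
Lemma K_pos : 0 < K.
Proof. by rewrite KE !muln_gt0 n0 X_pos. Qed.
Lemma XK : X <= K.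
Proof. rewrite KE -{1}(mul1n X) leq_mul2r; apply/orP; right; by rewrite muln_gt0 n0. Qed.
Lemma KN : K < N.+1.
Proof.
rewrite ltnS NE mulnA -{1}(mul1n K) leq_mul2r; apply/orP; right.
by rewrite muln_gt0 n0.
Qed.
Lemma h2 : N.+1 ^ n <= X * K ^ n.
Proof.
have h1 : N.+1 <= 5 * n * K.
  have kp := K_pos.
  have : 1 <= n * K by rewrite muln_gt0 n0 kp.
  rewrite NE mulnCA mulnA -[5 * n * K]mulnA mulnA; set m := n * K; lia.
by rewrite XE -expnMn leq_exp2r.
Qed.
Lemma hp : n * n * N.+1 ^ n <= K * K ^ n.
Proof.
apply: leq_trans (_ : n * n * (X * K ^ n) <= _); first by rewrite leq_mul2l h2 orbT.
by rewrite mulnA KE.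
Qed.

Lemma num1 : n * n * N.+1 ^ n < (4 * K) ^ n * N.+1.
Proof.
apply: leq_ltn_trans hp _.
have kn : 0 < K ^ n by rewrite expn_gt0 K_pos.
apply: (@leq_trans (N.+1 * K ^ n)); first by rewrite ltn_pmul2r // KN.
by rewrite mulnC leq_mul2r leq_exp2r // leq_pmull ?orbT.
Qed.

Lemma num2 : n * n * N.+1 ^ n < n * n * K ^ n * N.+1.
Proof.
apply: (@leq_ltn_trans (n * n * (X * K ^ n))); first by rewrite leq_mul2l h2 orbT.
rewrite -!mulnA ltn_pmul2l ?muln_gt0 ?n0 // ltn_pmul2l ?n0 //.
rewrite mulnC ltn_pmul2l ?expn_gt0 ?K_pos //.
exact: leq_ltn_trans XK KN.
Qed.
End Num.

Unset Implicit Arguments.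
Set Strict Implicit.

Theorem mainTheorem8 (T : finType) (P Q : rel T) :
  is_partial_order P -> is_partial_order Q ->
  (forall x y : T, comparable_in Q x y -> comparable_in P x y) ->
  num_linext P <= num_linext Q /\
  ((exists x y : T, comparable_in P x y && ~~ comparable_in Q x y) ->
   num_linext P < num_linext Q).
Proof.
move=> [Pr [Pa Pt]] [Qr [Qa Qt]] PQ.
pose n := #|T|.
pose X := (5 * n) ^ n.
pose K := n * n * X.
pose N := n * (4 * K).
have XE : X = (5 * n) ^ n by [].
have KE : K = n * n * X by [].
have NE : N = n * (4 * K) by [].
pose c := #|Inc T N|.
pose nI := #|NI T N|.
have hc : (4 * K) ^ n <= c := Inc_bound T (4 * K).
have hNI : nI * N.+1 <= n * n * N.+1 ^ n := NI_bound T N.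
have hP : num_linext P * c <= #|Amaps P N|.
  by rewrite -(card_SA Pr Pa Pt) -card_Inj; apply: card_Inj_le.
have hQ : #|Amaps Q N| <= num_linext Q * c + nI.
  by rewrite -(card_SA Qr Qa Qt) -card_Inj; apply: card_S_le.
have hPQ : #|Amaps P N| <= #|Amaps Q N| := subset_leq_card (AmapsPQ PQ N).
have num1' : n * n * N.+1 ^ n < (4 * K) ^ n * N.+1.
  have [n0|n0] := posnP n; last by move: (num1 n0 XE KE NE).
  by rewrite n0 /= mul1n.
have part1 : num_linext P <= num_linext Q.
  rewrite leqNgt; apply/negP => lt.
  have : (num_linext Q).+1 * c <= num_linext P * c by rewrite leq_mul2r lt orbT.
  rewrite mulSn => h.
  have cnI : c <= nI.
    move: h hP hQ hPQ; set a := num_linext Q * c; set b := num_linext P * c; lia.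
  have : c * N.+1 <= nI * N.+1 by rewrite leq_mul2r cnI orbT.
  have : (4 * K) ^ n * N.+1 <= c * N.+1 by rewrite leq_mul2r hc orbT.
  move: num1' hNI; set u := n * n * N.+1 ^ n; set v := (4 * K) ^ n * N.+1.
  set w := c * N.+1; set z := nI * N.+1; lia.
split => // -[x [y /andP[cP ncQ]]].
move: cP ncQ; rewrite /comparable_in => /andP[nxy Pxy].
rewrite nxy /= negb_or => /andP[nQxy nQyx].
have hD := D_bound nxy Pxy nQxy nQyx PQ NE.
have n0 : 0 < n by apply/card_gt0P; exists x.
have num2' := num2 n0 XE KE NE.
rewrite ltn_neqAle part1 andbT; apply/negP => /eqP E.
rewrite E in hP.
have hd : K ^ n * (n * n) <= nI.
  move: hD hP hQ hPQ; set a := num_linext Q * c; set d := K ^ n * (n * n); lia.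
have : K ^ n * (n * n) * N.+1 <= nI * N.+1 by rewrite leq_mul2r hd orbT.
rewrite [K ^ n * _]mulnC.
move: num2' hNI; set u := n * n * N.+1 ^ n; set v := n * n * K ^ n * N.+1.
set z := nI * N.+1; lia.
Qed.
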